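(* Let $(T_1,T_2,T_3)$ be an associative Clifford extension over $(V,S^0,S^1)$. Then for any $v_1,v_2\in V$ the linear operator on $T_2$ given by $t\mapsto \big(v_1(v_2s^0)\big)\big(s^0t\big)$ is the same for all unit vectors $s^0\in S^0$. (Here $v_1(v_2s^0)\in S^0$, $s^0t\in T_1$, and the result lies in $T_2$.)
   Context: All spaces are finite-dimensional real Euclidean. For a Euclidean space $X$, $\mathrm{Cl}(X)$ is the Clifford algebra with $x\cdot x=-|x|^2$; a ''$\mathrm{Cl}(X)$-module $Y\oplus Z$'' is a $\mathbb Z/2$-graded module with $X\cdot Y\subset Z$, $X\cdot Z\subset Y$, $Y\perp Z$, each $x\in X$ acting skew-symmetrically; the action is written $xy$. Let $V\neq0$ be Euclidean and $S^0\oplus S^1$ a nonzero $\mathrm{Cl}(V)$-module. A Clifford extension over $(V,S^0,S^1)$ is a triple of Euclidean spaces $T_1,T_2,T_3$ of equal dimension together with a $\mathrm{Cl}(V)$-module structure on $T_2\oplus T_3$, a $\mathrm{Cl}(S^0)$-module structure on $T_1\oplus T_2$, and a $\mathrm{Cl}(S^1)$-module structure on $T_1\oplus T_3$. It is associative if $(vs^0)t_1=v(s^0t_1)$ for all $v\in V,s^0\in S^0,t_1\in T_1$. *)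

(* Defs.v *)
(* Euclidean spaces of dimension n are modeled as 'rV[R]_n
   with the standard inner product, R : realType. *)
From HB Require Import structures.
From mathcomp Require Import all_boot all_order all_algebra.
From mathcomp Require Import reals.
Set Implicit Arguments. Unset Strict Implicit. Unset Printing Implicit Defensive.
Import Order.TTheory GRing.Theory Num.Theory.
Local Open Scope ring_scope.

Definition dotv (R : realType) (n : nat) (u v : 'rV[R]_n) : R := (u *m v^T) 0 0.

(* A Z/2-graded Cl(X)-module Y (+) Z, with X = R^p, Y = R^a, Z = R^b
   (Y and Z orthogonal, as the orthogonal direct sum).
   actY x y = x y in Z for y in Y,  actZ x z = x z in Y for z in Z. *)
Record CliffordModule (R : realType) (p a b : nat) := {
  actY : 'rV[R]_p -> 'rV[R]_a -> 'rV[R]_b;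
  actZ : 'rV[R]_p -> 'rV[R]_b -> 'rV[R]_a;
  actY_linl : forall (c : R) x x' y, actY (c *: x + x') y = c *: actY x y + actY x' y;
  actY_linr : forall (c : R) x y y', actY x (c *: y + y') = c *: actY x y + actY x y';
  actZ_linl : forall (c : R) x x' z, actZ (c *: x + x') z = c *: actZ x z + actZ x' z;
  actZ_linr : forall (c : R) x z z', actZ x (c *: z + z') = c *: actZ x z + actZ x z';
  act_skew : forall x y z, dotv (actY x y) z = - dotv y (actZ x z);
  act_cliffY : forall x y, actZ x (actY x y) = - (dotv x x) *: y;
  act_cliffZ : forall x z, actY x (actZ x z) = - (dotv x x) *: z
}.

(* Clifford extension (T1,T2,T3) over (V,S0,S1), with dim V = p,
   dim S0 = n0, dim S1 = n1, dim T_i = m, given the Cl(V)-module S0 (+) S1 MS. *)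
Record CliffordExtension (R : realType) (p n0 n1 m : nat) := {
  modV  : CliffordModule R p m m;    (* Cl(V)-module  T2 (+) T3 *)
  modS0 : CliffordModule R n0 m m;   (* Cl(S0)-module T1 (+) T2 *)
  modS1 : CliffordModule R n1 m m    (* Cl(S1)-module T1 (+) T3 *)
}.

Definition associative_ext (R : realType) (p n0 n1 m : nat)
  (MS : CliffordModule R p n0 n1) (E : CliffordExtension R p n0 n1 m) : Prop :=
  forall (v : 'rV[R]_p) (s0 : 'rV[R]_n0) (t1 : 'rV[R]_m),
    actY (modS1 E) (actY MS v s0) t1 = actY (modV E) v (actY (modS0 E) s0 t1).

(* Main.v *)
Require Import Defs.
From HB Require Import structures.
From mathcomp Require Import all_boot all_order all_algebra.
From mathcomp Require Import reals.
Import Order.TTheory GRing.Theory Num.Theory.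
Local Open Scope ring_scope.

Section Helpers.
Variables (R : realType) (p a b : nat) (M : CliffordModule R p a b).

Lemma actY_x0 x : actY M x 0 = 0.
Proof.
have := actY_linr M 1 x 0 0; rewrite !scale1r addr0 => H.
by apply: (addrI (actY M x 0)); rewrite addr0 -H.
Qed.
Lemma actY_0y y : actY M 0 y = 0.
Proof.
have := actY_linl M 1 0 0 y; rewrite !scale1r addr0 => H.
by apply: (addrI (actY M 0 y)); rewrite addr0 -H.
Qed.
Lemma actZ_x0 x : actZ M x 0 = 0.
Proof.
have := actZ_linr M 1 x 0 0; rewrite !scale1r addr0 => H.
by apply: (addrI (actZ M x 0)); rewrite addr0 -H.
Qed.
Lemma actZ_0y y : actZ M 0 y = 0.
Proof.
have := actZ_linl M 1 0 0 y; rewrite !scale1r addr0 => H.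
by apply: (addrI (actZ M 0 y)); rewrite addr0 -H.
Qed.
Lemma actY_scaler c x y : actY M x (c *: y) = c *: actY M x y.
Proof. by have := actY_linr M c x y 0; rewrite addr0 actY_x0 addr0. Qed.
Lemma actY_scalel c x y : actY M (c *: x) y = c *: actY M x y.
Proof. by have := actY_linl M c x 0 y; rewrite addr0 actY_0y addr0. Qed.
Lemma actZ_scaler c x y : actZ M x (c *: y) = c *: actZ M x y.
Proof. by have := actZ_linr M c x y 0; rewrite addr0 actZ_x0 addr0. Qed.
End Helpers.

Lemma dotv_eq0 (R : realType) n (v : 'rV[R]_n) : dotv v v = 0 -> v = 0.
Proof.
rewrite /dotv mxE => H; apply/matrixP => i j; rewrite mxE.
rewrite (ord1 i).
have P0 : forall k : 'I_n, xpredT k -> 0 <= v 0 k * v^T k 0.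
  by move=> k _; rewrite mxE -expr2 sqr_ge0.
have := psumr_eq0P P0 H (i:=j) isT.
by rewrite mxE => /eqP; rewrite mulf_eq0 orbb => /eqP.
Qed.

Theorem mainTheorem7 (R : realType) (p n0 n1 m : nat)
  (MS : CliffordModule R p n0 n1) (E : CliffordExtension R p n0 n1 m) :
  (0 < p)%N -> (0 < n0 + n1)%N ->
  associative_ext MS E ->
  forall (v1 v2 : 'rV[R]_p) (s s' : 'rV[R]_n0),
    dotv s s = 1 -> dotv s' s' = 1 ->
    forall t : 'rV[R]_m,
      actY (modS0 E) (actZ MS v1 (actY MS v2 s)) (actZ (modS0 E) s t)
      = actY (modS0 E) (actZ MS v1 (actY MS v2 s')) (actZ (modS0 E) s' t).
Proof.
move=> _ _ As v1 v2 s s' Hs Hs' t.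
have [->|nz] := eqVneq v1 0.
  by rewrite !actZ_0y !actY_0y.
have dnz : dotv v1 v1 != 0.
  by apply: contra nz => /eqP /dotv_eq0 ->.
have K : forall s1 x, dotv v1 v1 *: actY (modS0 E) (actZ MS v1 s1) x
   = dotv v1 v1 *: actZ (modV E) v1 (actY (modS1 E) s1 x).
  move=> s1 x.
  rewrite -[LHS]opprK -scaleNr -(act_cliffY (modV E) v1) -As act_cliffZ.
  by rewrite actY_scalel actZ_scaler scaleNr opprK.
have G : forall u, dotv u u = 1 ->
  dotv v1 v1 *: actY (modS0 E) (actZ MS v1 (actY MS v2 u)) (actZ (modS0 E) u t)
  = dotv v1 v1 *: actZ (modV E) v1 (actY (modV E) v2 (- t)).
  move=> u Hu; rewrite K As act_cliffZ Hu.
  by rewrite scaleN1r.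
apply: (scalerI dnz).
by rewrite G // G.
Qed.
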